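(* Let $V_1, V_2$ be disjoint finite sets of nails. Let $h_1 \in F(V_1)$ solve a specification $f_1$ on $V_1$, and $h_2 \in F(V_2)$ solve a specification $f_2$ on $V_2$. Regard $f_1, f_2$ as functions on subsets $S \subseteq V_1 \cup V_2$ via $S \mapsto f_i(S \cap V_i)$. Then, as words in $F(V_1 \cup V_2)$, $h_1 + h_2$ solves $f_1 \wedge f_2$, and the commutator $[h_1, h_2] = h_1 + h_2 - h_1 - h_2$ solves $f_1 \vee f_2$.
   Context: Words are elements of the free group $F(V)$ on a finite set $V$ of nails, written additively ($+$ group operation, $-$ inverse, $0$ identity). For $S \subseteq V$, $h|_S$ is the image of $h$ under the homomorphism killing the generators in $S$ (''removing the nails in $S$''). A specification on $V$ is a monotone function $f: 2^V \to \{\mathsf{hang}, \mathsf{fall}\}$ with $f(V) = \mathsf{fall}$, where $\mathsf{hang} < \mathsf{fall}$ and monotone means $S \subseteq S' \Rightarrow f(S) \le f(S')$. A word $h$ on $V$ solves $f$ if for every $S \subseteq V$: $h|_S = 0 \iff f(S) = \mathsf{fall}$. The operations $\vee$ and $\wedge$ on specifications are pointwise $\max$ and $\min$ with respect to $\mathsf{hang} < \mathsf{fall}$. *)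

(* Defs.v *)
(* Free group F(V) on a set V of nails (V : {set T}, T a finType),
   realised as words (seq of letters (x, b), b = true meaning the inverse x^-1)
   modulo free reduction. *)
From mathcomp Require Import all_boot.
Set Implicit Arguments. Unset Strict Implicit. Unset Printing Implicit Defensive.

Section FreeGroup.
Variable T : finType.

Definition letter := (T * bool)%type.
Definition word := seq letter.

Definition flip (l : letter) : letter := (l.1, ~~ l.2).

Definition reduce (w : word) : word :=
  foldr (fun x acc => match acc with
                      | y :: t => if y == flip x then t else x :: acc
                      | [::] => [:: x] end) [::] w.

Definition wadd (u v : word) : word := u ++ v.
Definition wopp (u : word) : word := rev (map flip u).
Definition wcomm (u v : word) : word := u ++ v ++ wopp u ++ wopp v.

Definition is_zero (w : word) : bool := reduce w == [::].

(* h|_S : kill the generators in S *)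
Definition restrict (S : {set T}) (w : word) : word :=
  [seq l <- w | l.1 \notin S].

Definition word_on (V : {set T}) (w : word) : bool := all (fun l => l.1 \in V) w.

End FreeGroup.

Inductive outcome := hang | fall.
Definition outcome_eqb (a b : outcome) : bool :=
  match a, b with hang, hang | fall, fall => true | _, _ => false end.
Definition ole (a b : outcome) : bool :=
  match a, b with fall, hang => false | _, _ => true end.
Definition omax (a b : outcome) : outcome := if ole a b then b else a.
Definition omin (a b : outcome) : outcome := if ole a b then a else b.

Definition is_spec (T : finType) (V : {set T}) (f : {set T} -> outcome) : Prop :=
  (forall S S' : {set T}, S \subset S' -> S' \subset V -> ole (f S) (f S')) /\ f V = fall.

Definition solves (T : finType) (V : {set T}) (f : {set T} -> outcome) (h : word T) : Prop :=
  forall S : {set T}, S \subset V -> (is_zero (restrict S h) <-> f S = fall).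

(* Main.v *)
Require Import Defs.
From mathcomp Require Import all_boot.
From Stdlib Require Import Setoid.
Set Implicit Arguments. Unset Strict Implicit. Unset Printing Implicit Defensive.

Section FG.
Variable T : finType.
Implicit Types (x y : letter T) (u v w acc : word T).

Definition step x acc : word T :=
  match acc with
  | y :: t => if y == flip x then t else x :: acc
  | [::] => [:: x] end.

Lemma reduceE w : reduce w = foldr step [::] w.
Proof. by []. Qed.

Definition rr (a b : letter T) := b != flip a.

Lemma flipK x : flip (flip x) = x.
Proof. by case: x => a b; rewrite /flip /= negbK. Qed.

Lemma step_sorted x acc : sorted rr acc -> sorted rr (step x acc).
Proof.
case: acc => [|y t] //= H.
case: ifP => E; first exact: path_sorted H.
by rewrite /= /rr E H.
Qed.

Lemma reduce_sorted w : sorted rr (reduce w).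
Proof. elim: w => //= x w IH; exact: step_sorted. Qed.

Lemma step_cancel x w : sorted rr w -> step x (step (flip x) w) = w.
Proof.
case: w => [|z t] /=; first by rewrite eqxx.
rewrite flipK; case: eqP => [->|ne] H.
  case: t H => [|z' t'] //= /andP [H1 _].
  by rewrite (negbTE H1).
by rewrite /= eqxx.
Qed.

Lemma foldr_sorted acc u : sorted rr acc -> sorted rr (foldr step acc u).
Proof. move=> H; elim: u => //= x u IH; exact: step_sorted. Qed.

Lemma foldr_reduce acc u : sorted rr acc -> foldr step acc u = foldr step acc (reduce u).
Proof.
move=> Hacc; elim: u => //= x u IH.
rewrite IH; case E: (reduce u) => [|y t] //=.
case: ifP => // /eqP ->.
rewrite -/(foldr step acc (y :: t)) /=.
by rewrite step_cancel // foldr_sorted.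
Qed.

Lemma reduce_cat u w : reduce (u ++ w) = foldr step (reduce w) (reduce u).
Proof. by rewrite reduceE foldr_cat -reduceE -foldr_reduce // reduce_sorted. Qed.

Lemma reduce_id w : sorted rr w -> reduce w = w.
Proof.
elim: w => //= x w IH H.
rewrite IH ?(path_sorted H) //; case: w H {IH} => //= y t /andP [H1 _].
by rewrite (negbTE H1).
Qed.

Lemma reduceK w : reduce (reduce w) = reduce w.
Proof. exact/reduce_id/reduce_sorted. Qed.

Lemma reduce_zero_l u w : reduce u = [::] -> reduce (u ++ w) = reduce w.
Proof. by move=> H; rewrite reduce_cat H. Qed.

Lemma reduce_zero_r u w : reduce w = [::] -> reduce (u ++ w) = reduce u.
Proof. by move=> H; rewrite reduce_cat H -reduceE reduceK. Qed.

Lemma reduce_congr u w w' : reduce w = reduce w' -> reduce (u ++ w) = reduce (u ++ w').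
Proof. by move=> H; rewrite !reduce_cat H. Qed.

Lemma wopp_cons x u : wopp (x :: u) = wopp u ++ [:: flip x].
Proof. by rewrite /wopp /= rev_cons cats1. Qed.

Lemma woppK u : wopp (wopp u) = u.
Proof. by rewrite /wopp map_rev revK -map_comp (eq_map (@flipK)) map_id. Qed.

Lemma reduce_oppl u : reduce (wopp u ++ u) = [::].
Proof.
elim: u => //= x u IH.
rewrite wopp_cons -catA.
rewrite (@reduce_congr _ _ u) //.
by have := step_cancel (flip x) (reduce_sorted u); rewrite flipK.
Qed.

Lemma reduce_oppr u : reduce (u ++ wopp u) = [::].
Proof. by rewrite -{1}(woppK u) reduce_oppl. Qed.

Lemma reduce_opp0 u : reduce u = [::] -> reduce (wopp u) = [::].
Proof. by move=> H; rewrite -(reduce_zero_r (wopp u) H) reduce_oppl. Qed.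

Lemma foldr_disj (p : pred (letter T)) acc w :
  (forall x, p (flip x) = p x) -> all p w ->
  (forall y t, acc = y :: t -> ~~ p y) ->
  foldr step acc w = reduce w ++ acc.
Proof.
move=> Hf; elim: w => //= x w IH /andP [px pw] Hacc.
rewrite IH //; case: (reduce w) => [|y t] /=.
  clear IH; case: acc Hacc => // y t /(_ y t erefl) py.
  rewrite /=; case: eqP => // E; by move: py; rewrite E Hf px.
by case: ifP.
Qed.

Lemma all_reduce (p : pred (letter T)) w :
  (forall x, p (flip x) = p x) -> all p w -> all p (reduce w).
Proof.
move=> Hf; elim: w => //= x w IH /andP [px /IH].
case: (reduce w) => [|y t] /=; first by rewrite px.
by case: ifP => _ /= ; [case/andP | rewrite px => ->].
Qed.

Lemma all_wopp (p : pred (letter T)) w :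
  (forall x, p (flip x) = p x) -> all p w -> all p (wopp w).
Proof. by move=> Hf; rewrite /wopp all_rev all_map; apply: sub_all => x /=; rewrite Hf. Qed.


Lemma cat_nil_iff (a b : word T) : a ++ b = [::] <-> a = [::] /\ b = [::].
Proof. case: a => [|x a]; case: b => [|y b] //=; split=> //; by case. Qed.

Lemma sum_zero (A : {set T}) u v :
  all (fun l => l.1 \in A) u -> all (fun l => l.1 \notin A) v ->
  is_zero (wadd u v) <-> is_zero u /\ is_zero v.
Proof.
move=> Hu Hv; rewrite /is_zero /wadd reduceE foldr_cat -reduceE.
rewrite (@foldr_disj (fun l => l.1 \in A)) //.
  by case: (reduce u); case: (reduce v) => //=; split=> //; case.
move=> y t E; have := all_reduce (p := fun l => l.1 \notin A) (fun x => erefl) Hv.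
by rewrite E => /andP [].
Qed.

Lemma comm_zero (A : {set T}) u v :
  all (fun l => l.1 \in A) u -> all (fun l => l.1 \notin A) v ->
  is_zero (wcomm u v) <-> is_zero u \/ is_zero v.
Proof.
move=> Hu Hv; rewrite /is_zero /wcomm; split; last first.
  case=> /eqP H.
    rewrite reduce_zero_l // (@reduce_congr _ _ (wopp v)) ?reduce_oppr //.
    by rewrite reduce_zero_l // reduce_opp0.
  rewrite (@reduce_congr _ _ (wopp u ++ wopp v)); last by rewrite reduce_zero_l.
  by rewrite catA reduce_zero_r ?reduce_oppr // reduce_opp0.
move=> Z; apply/orP; apply/negPn/negP; rewrite negb_or => /andP [nu nv].
have nu' : reduce (wopp u) != [::].
  by apply/eqP => /reduce_opp0; rewrite woppK; apply/eqP.
have nv' : reduce (wopp v) != [::].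
  by apply/eqP => /reduce_opp0; rewrite woppK; apply/eqP.
move: Z; rewrite reduceE !foldr_cat -reduceE.
have Hu' := all_wopp (p := fun l => l.1 \in A) (fun x => erefl) Hu.
have Hv' := all_wopp (p := fun l => l.1 \notin A) (fun x => erefl) Hv.
have Rv' := all_reduce (p := fun l => l.1 \notin A) (fun x => erefl) Hv'.
have Ru' := all_reduce (p := fun l => l.1 \in A) (fun x => erefl) Hu'.
have Rv := all_reduce (p := fun l => l.1 \notin A) (fun x => erefl) Hv.
rewrite (@foldr_disj (fun l => l.1 \in A) _ (wopp u)) //; last first.
  by move=> y t E; move: Rv'; rewrite E => /andP [].
rewrite (@foldr_disj (fun l => l.1 \notin A) _ v) //; last first.
  move=> y t; case E: (reduce (wopp u)) nu' => [|z r] // _ [<- _].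
  by move: Ru'; rewrite E /= negbK => /andP [].
rewrite (@foldr_disj (fun l => l.1 \in A) _ u) //; last first.
  move=> y t; case E: (reduce v) nv => [|z r] // _ [<- _].
  by move: Rv; rewrite E /= => /andP [].
by case: (reduce u) nu.
Qed.
End FG.

Lemma restrict_on (T : finType) (V S : {set T}) (h : word T) :
  word_on V h -> restrict S h = restrict (S :&: V) h.
Proof.
rewrite /word_on /restrict => H; apply: eq_in_filter => l /(allP H) lV.
by rewrite inE lV andbT.
Qed.

Lemma restrict_all (T : finType) (V S : {set T}) (h : word T) :
  word_on V h -> all (fun l => l.1 \in V) (restrict S h).
Proof. by move=> H; rewrite /restrict all_filter; apply: sub_all H => l /= ->; rewrite implybT. Qed.

Lemma restrict_opp (T : finType) (S : {set T}) (h : word T) :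
  restrict S (wopp h) = wopp (restrict S h).
Proof. by rewrite /restrict /wopp filter_rev filter_map. Qed.


Theorem lemma1 (T : finType) (V1 V2 : {set T}) (f1 f2 : {set T} -> outcome)
    (h1 h2 : word T) :
  [disjoint V1 & V2] ->
  is_spec V1 f1 -> is_spec V2 f2 ->
  word_on V1 h1 -> word_on V2 h2 ->
  solves V1 f1 h1 -> solves V2 f2 h2 ->
  solves (V1 :|: V2) (fun S => omin (f1 (S :&: V1)) (f2 (S :&: V2))) (wadd h1 h2) /\
  solves (V1 :|: V2) (fun S => omax (f1 (S :&: V1)) (f2 (S :&: V2))) (wcomm h1 h2).
Proof.
move=> dis _ _ w1 w2 s1 s2.
have e1 : forall S : {set T}, S \subset V1 :|: V2 -> is_zero (restrict S h1) <-> f1 (S :&: V1) = fall.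
  by move=> S _; rewrite (restrict_on _ w1); apply: s1; apply: subsetIr.
have e2 : forall S : {set T}, S \subset V1 :|: V2 -> is_zero (restrict S h2) <-> f2 (S :&: V2) = fall.
  by move=> S _; rewrite (restrict_on _ w2); apply: s2; apply: subsetIr.
have a1 : forall S : {set T}, all (fun l => l.1 \in V1) (restrict S h1) by move=> S; apply: restrict_all.
have a2 : forall S : {set T}, all (fun l => l.1 \notin V1) (restrict S h2).
  move=> S; apply: sub_all (restrict_all S w2) => l lV.
  by rewrite (disjointFl dis lV).
split=> S sS.
  rewrite /restrict /wadd filter_cat -!/(restrict _ _) (sum_zero (a1 S) (a2 S)) (e1 S sS) (e2 S sS).
  by case: (f1 _); case: (f2 _); rewrite /omin /omax /=; intuition congruence.
rewrite /wcomm /restrict !filter_cat -!/(restrict _ _) !restrict_opp -/(wcomm _ _).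
rewrite (comm_zero (a1 S) (a2 S)) (e1 S sS) (e2 S sS).
by case: (f1 _); case: (f2 _); rewrite /omin /omax /=; intuition congruence.
Qed.
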